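(* The class $\mathrm{Age}(C_3[I_\omega]^* )$ has the Ramsey property.
   Context: For relational structures $\mathbf A,\mathbf B$ in the same language, $\binom{\mathbf B}{\mathbf A}$ denotes the set of substructures of $\mathbf B$ isomorphic to $\mathbf A$. For $k\ge 1$, $\mathbf C\to(\mathbf B)^{\mathbf A}_k$ means: for every map $c:\binom{\mathbf C}{\mathbf A}\to[k]=\{0,\dots,k-1\}$ there is $\mathbf B'\in\binom{\mathbf C}{\mathbf B}$ such that $c$ is constant on $\binom{\mathbf B'}{\mathbf A}$. A class $\mathcal K$ of finite structures has the Ramsey property if for all $k\ge1$ and all $\mathbf A,\mathbf B\in\mathcal K$ there is $\mathbf C\in\mathcal K$ with $\mathbf C\to(\mathbf B)^{\mathbf A}_k$. The age of a structure is the class of finite structures embeddable in it. $C_3$ is the directed 3-cycle on $[3]=\{0,1,2\}$ with edges $(0,1),(1,2),(2,0)$. Fix a linear order $\prec$ on $\mathbb N$ with $(\mathbb N,\prec)\cong(\mathbb Q,<)$. $C_3[I_\omega]^*$ is the structure with universe $[3]\times\mathbb N$ in the language $\{E,P_0,P_1,P_2,<\}$ where $E((i,a),(j,b))$ iff $(i,j)$ is an edge of $C_3$; $P_i=\{i\}\times\mathbb N$; and $(i,a)<(j,b)$ iff $i<j$, or $i=j$ and $a\prec b$. *)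

(* Defs.v *)
From HB Require Import structures.
From mathcomp Require Import all_boot all_order all_algebra.
Set Implicit Arguments. Unset Strict Implicit. Unset Printing Implicit Defensive.

(* Finite structures in the language {E, P_0, P_1, P_2, <}:
   E and < binary, P_i unary (indexed by i : 'I_3). *)
Record fstr := FStr {
  car :> finType;
  relE : rel car;
  relP : 'I_3 -> pred car;
  relL : rel car }.

Definition is_emb (A B : fstr) (f : A -> B) : Prop :=
  injective f /\
  (forall x y, @relE B (f x) (f y) = @relE A x y) /\
  (forall i x, @relP B i (f x) = @relP A i x) /\
  (forall x y, @relL B (f x) (f y) = @relL A x y).

Definition is_copy (A C : fstr) (S : {set C}) : Prop :=
  exists f : A -> C, is_emb f /\ S = [set f x | x in A].

Definition arrows (C B A : fstr) (k : nat) : Prop :=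
  forall c : {set C} -> 'I_k,
    exists B' : {set C}, is_copy B B' /\
      forall S1 S2 : {set C}, is_copy A S1 -> S1 \subset B' ->
                              is_copy A S2 -> S2 \subset B' -> c S1 = c S2.

Definition ramsey_property (K : fstr -> Prop) : Prop :=
  forall k : nat, 1 <= k ->
  forall A B : fstr, K A -> K B -> exists C : fstr, K C /\ arrows C B A k.

(* The structure C_3[I_omega]^star, universe 'I_3 * nat, with a parameter prec
   (the fixed linear order on nat of type (Q,<)). *)
Definition c3E (u v : 'I_3 * nat) : Prop :=
  (val u.1 == 0 /\ val v.1 == 1) \/ (val u.1 == 1 /\ val v.1 == 2)
  \/ (val u.1 == 2 /\ val v.1 == 0).
Definition c3P (i : 'I_3) (u : 'I_3 * nat) : Prop := u.1 = i.
Definition c3L (prec : nat -> nat -> Prop) (u v : 'I_3 * nat) : Prop :=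
  (val u.1 < val v.1) \/ (u.1 = v.1 /\ prec u.2 v.2).

Definition emb_C3 (prec : nat -> nat -> Prop) (A : fstr) (f : A -> 'I_3 * nat) : Prop :=
  injective f /\
  (forall x y, c3E (f x) (f y) <-> @relE A x y) /\
  (forall i x, c3P i (f x) <-> @relP A i x) /\
  (forall x y, c3L prec (f x) (f y) <-> @relL A x y).

Definition age_C3 (prec : nat -> nat -> Prop) (A : fstr) : Prop :=
  exists f : A -> 'I_3 * nat, emb_C3 prec f.

Definition iso_to_Q (prec : nat -> nat -> Prop) : Prop :=
  exists h : nat -> rat, bijective h /\ forall a b, prec a b <-> (h a < h b)%R.

(* Main.v *)
Require Import Defs.
From mathcomp Require Import all_boot all_order all_algebra.
Set Implicit Arguments. Unset Strict Implicit. Unset Printing Implicit Defensive.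
Import Order.TTheory GRing.Theory Num.Theory.


Definition homog (U : finType) (T : Type) (c : {set U} -> T) (r : nat) (Y : {set U}) :=
  forall X1 X2 : {set U}, X1 \subset Y -> #|X1| = r -> X2 \subset Y -> #|X2| = r -> c X1 = c X2.

Definition RamseyP (T : finType) r m n := forall (U : finType) (D : {set U}) (c : {set U} -> T),
  n <= #|D| -> exists Y : {set U}, Y \subset D /\ m <= #|Y| /\ homog c r Y.

Fixpoint ehom (U : finType) (T : Type) (c : {set U} -> T) r (s : seq (U * T)) : Prop :=
  match s with
  | [::] => True
  | p :: s' => p.1 \notin map fst s' /\
      (forall X : {set U}, X \subset [set y in map fst s'] -> #|X| = r -> c (p.1 |: X) = p.2) /\
      ehom c r s'
  end.

Lemma ehom_uniq (U : finType) (T : Type) (c : {set U} -> T) r s : ehom c r s -> uniq (map fst s).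
Proof. elim: s => //= p s IH [H1 [_ H3]]; by rewrite H1 IH. Qed.

Lemma ehom_filter (U : finType) (T : eqType) (c : {set U} -> T) r s t :
  ehom c r s -> ehom c r (filter (fun p => p.2 == t) s).
Proof.
have sub : forall s' : seq (U * T), {subset map fst (filter (fun p => p.2 == t) s') <= map fst s'}.
  move=> s' y /mapP [p]; rewrite mem_filter => /andP [_ Hp] ->; exact: map_f.
elim: s => //= p s IH [H1 [H2 H3]].
case: ifP => _ /=; last exact: IH.
split; first by apply: contra H1; apply: sub.
split; last exact: IH.
move=> X HX Hc; apply: H2 => //; apply: (subset_trans HX); apply/subsetP => y.
rewrite !inE; exact: sub.
Qed.

Lemma ehom_const (U : finType) (T : eqType) (c : {set U} -> T) r s t :
  ehom c r s -> all (fun p => p.2 == t) s ->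
  forall Z : {set U}, Z \subset [set y in map fst s] -> #|Z| = r.+1 -> c Z = t.
Proof.
elim: s => [|p s IH] /= Hs Hall Z HZ Hc.
  have : Z \subset set0 by apply: (subset_trans HZ); apply/subsetP => y; rewrite inE.
  by rewrite subset0 => /eqP HZ0; move: Hc; rewrite HZ0 cards0.
case: Hs => [H1 [H2 H3]]; case/andP: Hall => /eqP Ht Hall.
case: (boolP (p.1 \in Z)) => Hx.
  rewrite -(setD1K Hx) H2 //.
    apply/subsetP => y; rewrite !inE => /andP [Hy HyZ].
    by move/subsetP: HZ => /(_ y HyZ); rewrite !inE (negbTE Hy).
  by move: Hc; rewrite (cardsD1 p.1 Z) Hx add1n => -[].
apply: IH => //; apply/subsetP => y HyZ.
move/subsetP: HZ => /(_ y HyZ); rewrite !inE; case/orP => // /eqP Hy.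
by move: Hx; rewrite -Hy HyZ.
Qed.

Lemma sum_count_eq (U : finType) (T : finType) (s : seq (U * T)) :
  \sum_(t : T) count (fun p => p.2 == t) s = size s.
Proof.
elim: s => [|x s IH] /=; first by rewrite big1.
rewrite big_split /= IH (bigD1 x.2) //= eqxx big1 ?add1n ?addn0 // => t.
by rewrite eq_sym => /negbTE ->.
Qed.

Lemma pigeon (U : finType) (T : finType) (s : seq (U * T)) m :
  #|T| * m < size s -> exists t, m < count (fun p => p.2 == t) s.
Proof.
move=> Hs; case: (boolP [exists t, m < count (fun p => p.2 == t) s]) => [/existsP //|].
rewrite negb_exists => /forallP H.
move: Hs; rewrite -sum_count_eq -sum_nat_const.
rewrite ltnNge => /negP HH; exfalso; apply: HH; apply: leq_sum => t _.
by rewrite leqNgt H.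
Qed.

Lemma ehom_seq (T : finType) r (IHr : forall m, exists n, RamseyP T r m n) L :
  exists n, forall (U : finType) (D : {set U}) (c : {set U} -> T), n <= #|D| ->
    exists s : seq (U * T), size s = L /\ {subset map fst s <= D} /\ ehom c r s.
Proof.
elim: L => [|L [nL HL]].
  by exists 0 => U D c _; exists [::].
have [n' Hn'] := IHr nL.
exists n'.+1 => U D c HD.
have : 0 < #|D| by apply: leq_ltn_trans HD.
rewrite card_gt0 => /set0Pn [x Hx].
have HD' : n' <= #|D :\ x|.
  by move: HD; rewrite (cardsD1 x D) Hx add1n ltnS.
have [Y [HYD [HYc HYh]]] := Hn' U (D :\ x) (fun X => c (x |: X)) HD'.
pose t := match [pick X : {set U} | (X \subset Y) && (#|X| == r)] with
          | Some X => c (x |: X) | None => c (x |: set0) end.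
have Ht : forall X : {set U}, X \subset Y -> #|X| = r -> c (x |: X) = t.
  move=> X HX HXc; rewrite /t; case: pickP => [X0 /andP [HX0 /eqP HX0c]|H].
    exact: (HYh X X0).
  by move: (H X); rewrite HX HXc eqxx.
have [s [Hs1 [Hs2 Hs3]]] := HL U Y c HYc.
exists ((x, t) :: s); split; first by rewrite /= Hs1.
split.
  move=> y; rewrite inE => /orP [/eqP -> //|/Hs2 Hy].
  by move/subsetP: HYD => /(_ y Hy); rewrite inE => /andP [].
split => /=.
  apply/negP => /Hs2 Hy; move/subsetP: HYD => /(_ x Hy). by rewrite !inE eqxx.
split => // X HX HXc; apply: Ht => //; apply: (subset_trans HX).
by apply/subsetP => y; rewrite inE => /Hs2.
Qed.

Lemma ramsey r : forall (T : finType) m, exists n, RamseyP T r m n.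
Proof.
elim: r => [|r IHr] T m.
  exists m => U D c HD; exists D; split; first exact: subxx. split; first by [].
  move=> X1 X2 _ /eqP; rewrite cards_eq0 => /eqP -> _ /eqP; by rewrite cards_eq0 => /eqP ->.
have [n Hn] := ehom_seq (IHr T) (#|T| * m).+1.
exists n => U D c HD.
have [s [Hs1 [Hs2 Hs3]]] := Hn U D c HD.
have [t Ht] : exists t, m <= count (fun p => p.2 == t) s.
  have [|t Ht] := @pigeon U T s m; first by rewrite Hs1.
  by exists t; apply: ltnW.
set s' := filter (fun p => p.2 == t) s.
have Hs'h : ehom c r s' by apply: ehom_filter.
exists [set y in map fst s']; split.
  apply/subsetP => y; rewrite inE => /mapP [p]; rewrite mem_filter => /andP [_ Hp] ->.
  by apply: Hs2; apply: map_f.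
split.
  rewrite cardsE; move/card_uniqP: (ehom_uniq Hs'h) ->.
  by rewrite size_map size_filter.
have Hall : all (fun p => p.2 == t) s' by apply: filter_all.
move=> X1 X2 H1 H1c H2 H2c.
by rewrite (ehom_const Hs'h Hall H1 H1c) (ehom_const Hs'h Hall H2 H2c).
Qed.

Lemma shrink (U : finType) (Y : {set U}) m : m <= #|Y| -> exists Z : {set U}, Z \subset Y /\ #|Z| = m.
Proof.
move=> H; have [n HY] : exists n, #|Y| = n by exists #|Y|.
rewrite HY in H; elim: n Y HY H => [|n IH] Y HY Hm.
  by exists Y; split => //; move: Hm; rewrite leqn0 HY => /eqP ->.
case: (ltnP m n.+1) => Hmn; last first.
  by exists Y; split => //; rewrite HY; apply/eqP; rewrite eqn_leq Hm Hmn.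
have : 0 < #|Y| by rewrite HY.
rewrite card_gt0 => /set0Pn [x Hx].
have [||Z [HZ HZc]] := IH (Y :\ x).
- by move: HY; rewrite (cardsD1 x Y) Hx add1n => -[].
- by [].
exists Z; split => //; apply: (subset_trans HZ); apply: subD1set.
Qed.

Lemma get_hom (T : finType) r m n (U : finType) : RamseyP T r m n -> n <= #|[set: U]| ->
  forall c : {set U} -> T, exists (Y rep : {set U}), #|Y| = m /\
    forall X : {set U}, X \subset Y -> #|X| = r -> c X = c rep.
Proof.
move=> HR Hn c.
have [Y [_ [HYc HYh]]] := HR U setT c Hn.
have [Z [HZ HZc]] := shrink HYc.
exists Z, (odflt set0 [pick X : {set U} | (X \subset Z) && (#|X| == r)]); split => //.
move=> X HX HXc; case: pickP => [X0 /andP [HX0 /eqP HX0c]|H] /=.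
  by apply: HYh => //; apply: subset_trans HZ.
by move: (H X); rewrite HX HXc eqxx.
Qed.

Lemma prod_ramsey (T : finType) a0 a1 a2 b0 b1 b2 : exists N0 N1 N2,
  forall c : {set 'I_N0.+1} -> {set 'I_N1.+1} -> {set 'I_N2.+1} -> T,
  exists (Y0 : {set 'I_N0.+1}) (Y1 : {set 'I_N1.+1}) (Y2 : {set 'I_N2.+1}),
  #|Y0| = b0 /\ #|Y1| = b1 /\ #|Y2| = b2 /\
  forall (X0 X0' : {set 'I_N0.+1}) (X1 X1' : {set 'I_N1.+1}) (X2 X2' : {set 'I_N2.+1}),
    X0 \subset Y0 -> #|X0| = a0 -> X1 \subset Y1 -> #|X1| = a1 -> X2 \subset Y2 -> #|X2| = a2 ->
    X0' \subset Y0 -> #|X0'| = a0 -> X1' \subset Y1 -> #|X1'| = a1 -> X2' \subset Y2 -> #|X2'| = a2 ->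
    c X0 X1 X2 = c X0' X1' X2'.
Proof.
have [N0 H0] := ramsey a0 T b0.
have [N1 H1] := ramsey a1 {ffun {set 'I_N0.+1} -> T} b1.
have [N2 H2] := ramsey a2 {ffun {set 'I_N0.+1} * {set 'I_N1.+1} -> T} b2.
exists N0, N1, N2 => c.
have [Y2 [r2 [HY2 Hr2]]] := get_hom H2 (leq_trans (leqnSn _) (eq_leq (esym (etrans (cardsT _) (card_ord _)))))
   (fun X2 => [ffun p : {set 'I_N0.+1} * {set 'I_N1.+1} => c p.1 p.2 X2]).
have [Y1 [r1 [HY1 Hr1]]] := get_hom H1 (leq_trans (leqnSn _) (eq_leq (esym (etrans (cardsT _) (card_ord _)))))
   (fun X1 => [ffun X0 : {set 'I_N0.+1} => c X0 X1 r2]).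
have [Y0 [r0 [HY0 Hr0]]] := get_hom H0 (leq_trans (leqnSn _) (eq_leq (esym (etrans (cardsT _) (card_ord _)))))
   (fun X0 => c X0 r1 r2).
exists Y0, Y1, Y2; do 3 (split => //).
have key : forall (X0 : {set 'I_N0.+1}) (X1 : {set 'I_N1.+1}) (X2 : {set 'I_N2.+1}), X0 \subset Y0 -> #|X0| = a0 -> X1 \subset Y1 -> #|X1| = a1 ->
    X2 \subset Y2 -> #|X2| = a2 -> c X0 X1 X2 = c r0 r1 r2.
  move=> X0 X1 X2 h0 h0' h1 h1' h2 h2'.
  have e2 : c X0 X1 X2 = c X0 X1 r2.
    by have := Hr2 X2 h2 h2' => /ffunP /(_ (X0, X1)); rewrite !ffunE.
  have e1 : c X0 X1 r2 = c X0 r1 r2.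
    by have := Hr1 X1 h1 h1' => /ffunP /(_ X0); rewrite !ffunE.
  by rewrite e2 e1 (Hr0 X0 h0 h0').
move=> X0 X0' X1 X1' X2 X2' *; by rewrite !key.
Qed.

Lemma order_iso (X : finType) (P : {set X}) (key : X -> rat) (Hk : {in P &, injective key})
  n (Y : {set 'I_n.+1}) : #|Y| = #|P| ->
  exists phi : X -> 'I_n.+1,
    (forall x, x \in P -> phi x \in Y) /\
    (forall x y, x \in P -> y \in P -> (val (phi x) < val (phi y))%N = (key x < key y)%R) /\
    (forall x y, x \in P -> y \in P -> phi x = phi y -> x = y) /\
    (forall y, y \in Y -> exists2 x, x \in P & phi x = y).
Proof.
move=> HYP.
set s := [seq i <- enum 'I_n.+1 | i \in Y].
have Hsort : sorted (fun a b : 'I_n.+1 => (val a < val b)%N) s.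
  apply: sorted_filter; first by move=> a b c; apply: ltn_trans.
  have := iota_ltn_sorted 0 n.+1; rewrite -val_enum_ord sorted_map; by [].
have Hsize : size s = #|Y|.
  have Hu : uniq s by apply: filter_uniq; apply: enum_uniq.
  move/card_uniqP: Hu <-; apply: eq_card => i; by rewrite mem_filter mem_enum andbT.
pose rk x := #|[set y in P | (key y < key x)%R]|.
have rk_lt : forall x, x \in P -> (rk x < #|P|)%N.
  move=> x Hx; apply: proper_card; apply/properP; split.
    by apply/subsetP => y; rewrite inE => /andP [].
  by exists x => //; rewrite inE Hx ltxx.
have rk_mono : forall x y, x \in P -> y \in P -> (key x < key y)%R -> (rk x < rk y)%N.
  move=> x y Hx Hy Hxy; apply: proper_card; apply/properP; split.
    apply/subsetP => z; rewrite !inE => /andP [-> Hz] /=; exact: lt_trans Hz Hxy.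
  by exists x; rewrite !inE ?Hx ?Hxy // ltxx.
pose phi x := nth ord0 s (rk x).
have nth_mono : forall i j, (i < j)%N -> (j < size s)%N -> (val (nth ord0 s i) < val (nth ord0 s j))%N.
  move=> i j Hij Hj.
  have Htr : transitive (fun a b : 'I_n.+1 => (val a < val b)%N).
    by move=> b a c; apply: ltn_trans.
  apply: (sorted_ltn_nth Htr ord0 Hsort) => //.
  by rewrite inE (ltn_trans Hij Hj).
have Heq : forall x y, x \in P -> y \in P -> (val (phi x) < val (phi y))%N = (key x < key y)%R.
  move=> x y Hx Hy; case: (ltgtP (key x) (key y)) => H.
  - by apply: nth_mono; [apply: rk_mono | rewrite Hsize HYP rk_lt].
  - apply/negbTE; rewrite -leqNgt; apply: ltnW; apply: nth_mono; first by apply: rk_mono.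
    by rewrite Hsize HYP rk_lt.
  - by rewrite (Hk x y Hx Hy H) ltnn.
have Hinj : forall x y, x \in P -> y \in P -> phi x = phi y -> x = y.
  move=> x y Hx Hy Hxy; case: (ltgtP (key x) (key y)) => H.
  - by move: (Heq x y Hx Hy); rewrite H Hxy ltnn.
  - by move: (Heq y x Hy Hx); rewrite H Hxy ltnn.
  - exact: Hk.
have HinY : forall x, x \in P -> phi x \in Y.
  move=> x Hx; have : phi x \in s by apply: mem_nth; rewrite Hsize HYP rk_lt.
  by rewrite mem_filter => /andP [].
exists phi; split => //; split => //; split => //.
have Hsub : [set phi x | x in P] \subset Y.
  by apply/subsetP => y /imsetP [x Hx ->]; apply: HinY.
have Hc : #|[set phi x | x in P]| = #|Y|.
  rewrite HYP; apply: card_in_imset => x y Hx Hy; exact: Hinj.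
move=> y Hy.
have : Y \subset [set phi x | x in P].
  by have := subset_leqif_card Hsub; rewrite Hc => -[_ <-].
by move/subsetP => /(_ y Hy) /imsetP [x Hx ->]; exists x.
Qed.

Definition i0 : 'I_3 := @Ordinal 3 0 isT.
Definition i1 : 'I_3 := @Ordinal 3 1 isT.
Definition i2 : 'I_3 := @Ordinal 3 2 isT.

Lemma I3 (i : 'I_3) : [\/ i = i0, i = i1 | i = i2].
Proof.
by case: i => [[|[|[|m]]] Hm]; do ?[by constructor; apply: val_inj].
Qed.

Definition CT (N0 N1 N2 : nat) : finType := ('I_N0.+1 + 'I_N1.+1 + 'I_N2.+1)%type.

Definition pidx N0 N1 N2 (x : CT N0 N1 N2) : 'I_3 :=
  match x with inl (inl _) => i0 | inl (inr _) => i1 | inr _ => i2 end.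
Definition vl N0 N1 N2 (x : CT N0 N1 N2) : nat :=
  match x with inl (inl a) => val a | inl (inr a) => val a | inr a => val a end.

Definition c3Eb (i j : 'I_3) : bool :=
  [|| (val i == 0) && (val j == 1), (val i == 1) && (val j == 2) | (val i == 2) && (val j == 0)].

Lemma c3E_b (u v : 'I_3 * nat) : c3E u v <-> c3Eb u.1 v.1.
Proof.
rewrite /c3E /c3Eb; split.
  by case=> [[-> ->]|[[-> ->]|[-> ->]]]; rewrite ?orbT.
by case/or3P => /andP [-> ->]; [left|right;left|right;right].
Qed.

Definition Cstr N0 N1 N2 : fstr :=
  @FStr (CT N0 N1 N2) (fun x y => c3Eb (pidx x) (pidx y)) (fun i x => pidx x == i)
    (fun x y => (val (pidx x) < val (pidx y))%N || ((pidx x == pidx y) && (vl x < vl y)%N)).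

Lemma pv_inj N0 N1 N2 (x y : CT N0 N1 N2) : pidx x = pidx y -> vl x = vl y -> x = y.
Proof.
case: x => [[a|a]|a]; case: y => [[b|b]|b] //= /(congr1 val) //= _ /val_inj -> //.
Qed.

Lemma prec_nat prec (Hp : iso_to_Q prec) : exists g : nat -> nat,
  forall a b, prec (g a) (g b) <-> (a < b)%N.
Proof.
case: Hp => h [[g hg gh] Hh].
exists (fun n => g (n%:R)%R) => a b; split => H.
  by move/Hh: H; rewrite !gh ltr_nat.
by apply (proj2 (Hh _ _)); rewrite !gh ltr_nat.
Qed.


Lemma C_age prec (Hp : iso_to_Q prec) N0 N1 N2 : age_C3 prec (Cstr N0 N1 N2).
Proof.
have [g Hg] := prec_nat Hp.
have ginj : injective g.
  move=> a b e; case: (ltngtP a b) => // H.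
    by move: (proj2 (Hg a b) H); rewrite e => /(proj1 (Hg _ _)); rewrite ltnn.
  by move: (proj2 (Hg b a) H); rewrite e => /(proj1 (Hg _ _)); rewrite ltnn.
exists (fun x => (pidx x, g (vl x))).
split.
  by move=> x y [e1 /ginj e2]; apply: pv_inj.
split; first by move=> x y; apply: c3E_b.
split.
  by move=> i x; rewrite /c3P /=; split => [->|/eqP].
move=> x y; rewrite /c3L /=; split.
  case=> [->//|[e H]]; by rewrite e eqxx (proj1 (Hg _ _) H) orbT.
case/orP => [H|/andP [/eqP e H]]; [by left | right; split => //; exact: (proj2 (Hg _ _) H)].
Qed.

Definition U3 N0 N1 N2 (X0 : {set 'I_N0.+1}) (X1 : {set 'I_N1.+1}) (X2 : {set 'I_N2.+1}) : {set CT N0 N1 N2} :=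
  [set (inl (inl y) : CT N0 N1 N2) | y in X0] :|: [set (inl (inr y) : CT N0 N1 N2) | y in X1]
  :|: [set (inr y : CT N0 N1 N2) | y in X2].

Section U3mem.
Variables (N0 N1 N2 : nat) (X0 : {set 'I_N0.+1}) (X1 : {set 'I_N1.+1}) (X2 : {set 'I_N2.+1}).

Lemma inj0 : injective (fun y => (inl (inl y) : CT N0 N1 N2)). Proof. by move=> a b []. Qed.
Lemma inj1 : injective (fun y => (inl (inr y) : CT N0 N1 N2)). Proof. by move=> a b []. Qed.
Lemma inj2 : injective (fun y => (inr y : CT N0 N1 N2)). Proof. by move=> a b []. Qed.

Lemma mem_U0 y : ((inl (inl y) : CT N0 N1 N2) \in U3 X0 X1 X2) = (y \in X0).
Proof.
rewrite !inE (mem_imset _ _ inj0).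
rewrite (_ : (_ \in [set (inl (inr y) : CT N0 N1 N2) | y in X1]) = false); last by apply/negbTE/imsetP => -[].
rewrite (_ : (_ \in [set (inr y : CT N0 N1 N2) | y in X2]) = false); last by apply/negbTE/imsetP => -[].
by rewrite !orbF.
Qed.

Lemma mem_U1 y : ((inl (inr y) : CT N0 N1 N2) \in U3 X0 X1 X2) = (y \in X1).
Proof.
rewrite !inE (mem_imset _ _ inj1).
rewrite (_ : (_ \in [set (inl (inl y) : CT N0 N1 N2) | y in X0]) = false); last by apply/negbTE/imsetP => -[].
rewrite (_ : (_ \in [set (inr y : CT N0 N1 N2) | y in X2]) = false); last by apply/negbTE/imsetP => -[].
by rewrite orbF.
Qed.

Lemma mem_U2 y : ((inr y : CT N0 N1 N2) \in U3 X0 X1 X2) = (y \in X2).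
Proof.
rewrite !inE (mem_imset _ _ inj2).
rewrite (_ : (_ \in [set (inl (inl y) : CT N0 N1 N2) | y in X0]) = false); last by apply/negbTE/imsetP => -[].
rewrite (_ : (_ \in [set (inl (inr y) : CT N0 N1 N2) | y in X1]) = false); last by apply/negbTE/imsetP => -[].
by [].
Qed.
End U3mem.

Lemma U3_decomp N0 N1 N2 (S : {set CT N0 N1 N2}) :
  S = U3 [set y | inl (inl y) \in S] [set y | inl (inr y) \in S] [set y | inr y \in S].
Proof.
by apply/setP => -[[y|y]|y]; rewrite ?mem_U0 ?mem_U1 ?mem_U2 inE.
Qed.

Lemma copy_part_card N0 N1 N2 (A : fstr) (S : {set CT N0 N1 N2}) n (inj : 'I_n -> CT N0 N1 N2) i
  (Hinj : injective inj) (Hp : forall y, pidx (inj y) = i)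
  (Hs : forall z, pidx z = i -> exists y, z = inj y) :
  @is_copy A (Cstr N0 N1 N2) S -> #|[set y | inj y \in S]| = #|[set x : A | @relP A i x]|.
Proof.
case=> f [[finj [_ [fP _]]] ->].
rewrite -(card_imset _ Hinj) -(card_imset _ finj).
apply: eq_card => z; apply/imsetP/imsetP.
  case=> y; rewrite inE => /imsetP [x _ e] ->; exists x => //.
  by rewrite inE -fP /= -e Hp.
case=> x; rewrite inE -fP /= => /eqP Hx ->.
have [y ey] := Hs _ Hx; exists y => //; rewrite inE -ey; exact: imset_f.
Qed.

Lemma B_copy prec (Hp : iso_to_Q prec) (B : fstr) (fB : B -> 'I_3 * nat) (HfB : emb_C3 prec fB)
  N0 N1 N2 (Y0 : {set 'I_N0.+1}) (Y1 : {set 'I_N1.+1}) (Y2 : {set 'I_N2.+1}) :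
  #|Y0| = #|[set x : B | relP i0 x]| -> #|Y1| = #|[set x : B | relP i1 x]| ->
  #|Y2| = #|[set x : B | relP i2 x]| -> @is_copy B (Cstr N0 N1 N2) (U3 Y0 Y1 Y2).
Proof.
move=> HY0 HY1 HY2.
case: Hp => h [[g hg gh] Hh].
case: HfB => [fBinj [fBE [fBP fBL]]].
have HP : forall i x, (x \in [set x : B | relP i x]) = ((fB x).1 == i).
  move=> i x; rewrite inE; apply/idP/eqP => H; [exact: (proj2 (fBP i x) H) | exact: (proj1 (fBP i x) H)].
pose key x := h (fB x).2.
have Hk : forall i, {in [set x : B | relP i x] &, injective key}.
  move=> i x y; rewrite !HP => /eqP ex /eqP ey e; apply: fBinj.
  have e2 : (fB x).2 = (fB y).2 by apply: (can_inj hg).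
  by rewrite [fB x]surjective_pairing [fB y]surjective_pairing ex ey e2.
have [phi0 [P0in [P0eq [P0inj P0sur]]]] := order_iso (Hk i0) HY0.
have [phi1 [P1in [P1eq [P1inj P1sur]]]] := order_iso (Hk i1) HY1.
have [phi2 [P2in [P2eq [P2inj P2sur]]]] := order_iso (Hk i2) HY2.
pose embB x : CT N0 N1 N2 := if (fB x).1 == i0 then inl (inl (phi0 x))
  else if (fB x).1 == i1 then inl (inr (phi1 x)) else inr (phi2 x).
have spec : forall x, [\/ (fB x).1 = i0 /\ embB x = inl (inl (phi0 x)),
    (fB x).1 = i1 /\ embB x = inl (inr (phi1 x)) | (fB x).1 = i2 /\ embB x = inr (phi2 x)].
  move=> x; rewrite /embB; case: (I3 (fB x).1) => ->; [constructor 1 | constructor 2 | constructor 3]; done.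
have pidx_emb : forall x, pidx (embB x) = (fB x).1.
  by move=> x; case: (spec x) => -[-> ->].
have vl_emb : forall x y, (fB x).1 = (fB y).1 -> (vl (embB x) < vl (embB y))%N = (key x < key y)%R.
  move=> x y e; case: (spec x) => -[ex ->]; case: (spec y) => -[ey ->]; rewrite ex ey in e;
    try (by move: e => /(congr1 val)); rewrite /=.
  - by apply: P0eq; rewrite HP ?ex ?ey.
  - by apply: P1eq; rewrite HP ?ex ?ey.
  - by apply: P2eq; rewrite HP ?ex ?ey.
exists embB; split; last first.
  apply/setP => -[[y|y]|y]; rewrite ?mem_U0 ?mem_U1 ?mem_U2; apply/idP/imsetP.
  - move=> Hy; have [x Hx ex] := P0sur y Hy; exists x => //.
    by case: (spec x) => -[e ->]; move: Hx; rewrite HP e // => _; rewrite ex.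
  - case=> x _; case: (spec x) => -[ex ->] // [->]; apply: P0in; by rewrite HP ex.
  - move=> Hy; have [x Hx ex] := P1sur y Hy; exists x => //.
    by case: (spec x) => -[e ->]; move: Hx; rewrite HP e // => _; rewrite ex.
  - case=> x _; case: (spec x) => -[ex ->] // [->]; apply: P1in; by rewrite HP ex.
  - move=> Hy; have [x Hx ex] := P2sur y Hy; exists x => //.
    by case: (spec x) => -[e ->]; move: Hx; rewrite HP e // => _; rewrite ex.
  - case=> x _; case: (spec x) => -[ex ->] // [->]; apply: P2in; by rewrite HP ex.
split.
  move=> x y e; have ep := congr1 (@pidx N0 N1 N2) e; rewrite !pidx_emb in ep.
  have ev := congr1 (@vl N0 N1 N2) e.
  have k1 := vl_emb x y ep; have k2 := vl_emb y x (esym ep).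
  rewrite ev ltnn in k1 k2.
  apply: (Hk (fB x).1); rewrite ?HP ?ep //.
  by case: (ltgtP (key x) (key y)) k1 k2.
split.
  move=> x y /=; rewrite !pidx_emb; apply/idP/idP => H.
    exact: (proj1 (fBE x y) (proj2 (c3E_b _ _) H)).
  exact: (proj1 (c3E_b _ _) (proj2 (fBE x y) H)).
split.
  move=> i x /=; rewrite pidx_emb; apply/eqP/idP => H.
    exact: (proj1 (fBP i x) H).
  exact: (proj2 (fBP i x) H).
move=> x y /=; rewrite !pidx_emb; apply/idP/idP => H.
  apply: (proj1 (fBL x y)); rewrite /c3L.
  case/orP: H => [H|/andP [/eqP e H]]; first by left.
  right; split => //; apply: (proj2 (Hh _ _)); by rewrite -(vl_emb x y e).
have := proj2 (fBL x y) H; rewrite /c3L; case => [->//|[e H']].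
by rewrite (vl_emb x y e) e eqxx (proj1 (Hh _ _) H') orbT.
Qed.

Lemma Hs0 N0 N1 N2 (z : CT N0 N1 N2) : pidx z = i0 -> exists y, z = inl (inl y).
Proof. by case: z => [[y|y]|y] /= e; [exists y | move: e => /(congr1 val) | move: e => /(congr1 val)]. Qed.
Lemma Hs1 N0 N1 N2 (z : CT N0 N1 N2) : pidx z = i1 -> exists y, z = inl (inr y).
Proof. by case: z => [[y|y]|y] /= e; [move: e => /(congr1 val) | exists y | move: e => /(congr1 val)]. Qed.
Lemma Hs2 N0 N1 N2 (z : CT N0 N1 N2) : pidx z = i2 -> exists y, z = inr y.
Proof. by case: z => [[y|y]|y] /= e; [move: e => /(congr1 val) | move: e => /(congr1 val) | exists y]. Qed.

Theorem theorem5p5 (prec : nat -> nat -> Prop) (Hprec : iso_to_Q prec) :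
  ramsey_property (age_C3 prec).
Proof.
move=> k Hk A B _ [fB HfB].
have [N0 [N1 [N2 HR]]] := prod_ramsey 'I_k #|[set x : A | relP i0 x]| #|[set x : A | relP i1 x]|
  #|[set x : A | relP i2 x]| #|[set x : B | relP i0 x]| #|[set x : B | relP i1 x]| #|[set x : B | relP i2 x]|.
exists (Cstr N0 N1 N2); split; first exact: C_age.
move=> c.
have [Y0 [Y1 [Y2 [H0 [H1 [H2 Hh]]]]]] := HR (fun X0 X1 X2 => c (U3 X0 X1 X2)).
exists (U3 Y0 Y1 Y2); split; first exact: (B_copy Hprec HfB H0 H1 H2).
move=> S1 S2 HS1 Hsub1 HS2 Hsub2.
rewrite (U3_decomp S1) (U3_decomp S2).
apply: Hh.
- by apply/subsetP => y; rewrite inE => Hy; rewrite -(mem_U0 Y0 Y1 Y2); exact: (subsetP Hsub1).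
- exact: (copy_part_card (@inj0 N0 N1 N2) (fun _ => erefl) (@Hs0 N0 N1 N2) HS1).
- by apply/subsetP => y; rewrite inE => Hy; rewrite -(mem_U1 Y0 Y1 Y2); exact: (subsetP Hsub1).
- exact: (copy_part_card (@inj1 N0 N1 N2) (fun _ => erefl) (@Hs1 N0 N1 N2) HS1).
- by apply/subsetP => y; rewrite inE => Hy; rewrite -(mem_U2 Y0 Y1 Y2); exact: (subsetP Hsub1).
- exact: (copy_part_card (@inj2 N0 N1 N2) (fun _ => erefl) (@Hs2 N0 N1 N2) HS1).
- by apply/subsetP => y; rewrite inE => Hy; rewrite -(mem_U0 Y0 Y1 Y2); exact: (subsetP Hsub2).
- exact: (copy_part_card (@inj0 N0 N1 N2) (fun _ => erefl) (@Hs0 N0 N1 N2) HS2).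
- by apply/subsetP => y; rewrite inE => Hy; rewrite -(mem_U1 Y0 Y1 Y2); exact: (subsetP Hsub2).
- exact: (copy_part_card (@inj1 N0 N1 N2) (fun _ => erefl) (@Hs1 N0 N1 N2) HS2).
- by apply/subsetP => y; rewrite inE => Hy; rewrite -(mem_U2 Y0 Y1 Y2); exact: (subsetP Hsub2).
- exact: (copy_part_card (@inj2 N0 N1 N2) (fun _ => erefl) (@Hs2 N0 N1 N2) HS2).
Qed.
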